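(* Let $A$ be a sequence algebra and $X$ an essential homogeneous normed $A$-module with completion $\overline X$. Then for every $x\in\overline X$ there exist $\bar x\in\overline X$ and real numbers $\lambda_n\ge1$ with $\lambda_n\to\infty$ such that $\bar x_n=\lambda_nx_n$ for all $n\in\mathbb N$.
   Context: Modules are contractive ($\|a\cdot x\|\le\|a\|\|x\|$). A sequence algebra is a normed algebra of complex sequences with coordinatewise operations containing $c_{00}$ as a dense subalgebra, with $\|\mathbf p^n\|=1$, where $\mathbf p^n$ has $1$ in place $n$ and $0$ elsewhere. For $x$ in a module, $x_n:=\mathbf p^n\cdot x$. $X$ is essential if the closed linear span of $\{a\cdot x\}$ is $X$; homogeneous if $\|x_n\|\le\|y_n\|$ for all $n$ implies $\|x\|\le\|y\|$. *)

(* Defs.v *)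
From Stdlib Require Import Reals.
Open Scope R_scope.

Record Cx := mkC { re : R ; im : R }.
Definition C0 : Cx := mkC 0 0.
Definition C1 : Cx := mkC 1 0.
Definition RtoC (r : R) : Cx := mkC r 0.
Definition Cadd (z w : Cx) : Cx := mkC (re z + re w) (im z + im w).
Definition Cmul (z w : Cx) : Cx :=
  mkC (re z * re w - im z * im w) (re z * im w + im z * re w).
Definition Copp (z : Cx) : Cx := mkC (- re z) (- im z).
Definition Cabs (z : Cx) : R := sqrt (re z * re z + im z * im z).

Record NormedSpace := {
  ns_car :> Type;
  vzero : ns_car;
  vadd : ns_car -> ns_car -> ns_car;
  vopp : ns_car -> ns_car;
  vscal : Cx -> ns_car -> ns_car;
  vnorm : ns_car -> R;
  vadd_assoc : forall x y z, vadd x (vadd y z) = vadd (vadd x y) z;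
  vadd_comm : forall x y, vadd x y = vadd y x;
  vadd_0 : forall x, vadd vzero x = x;
  vadd_opp : forall x, vadd x (vopp x) = vzero;
  vscal_1 : forall x, vscal C1 x = x;
  vscal_mul : forall c d x, vscal c (vscal d x) = vscal (Cmul c d) x;
  vscal_addl : forall c d x, vscal (Cadd c d) x = vadd (vscal c x) (vscal d x);
  vscal_addr : forall c x y, vscal c (vadd x y) = vadd (vscal c x) (vscal c y);
  vnorm_eq0 : forall x, vnorm x = 0 -> x = vzero;
  vnorm_triangle : forall x y, vnorm (vadd x y) <= vnorm x + vnorm y;
  vnorm_scal : forall c x, vnorm (vscal c x) = Cabs c * vnorm x
}.
Arguments vzero {n}.
Arguments vadd {n}.
Arguments vopp {n}.
Arguments vscal {n}.
Arguments vnorm {n}.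

Definition vsub {X : NormedSpace} (x y : X) : X := vadd x (vopp y).

Definition is_complete (X : NormedSpace) : Prop :=
  forall u : nat -> X,
    (forall eps, 0 < eps -> exists N, forall m n, (N <= m)%nat -> (N <= n)%nat ->
        vnorm (vsub (u m) (u n)) < eps) ->
    exists l : X, forall eps, 0 < eps -> exists N, forall n, (N <= n)%nat ->
        vnorm (vsub (u n) l) < eps.

Inductive in_span {X : NormedSpace} (S : X -> Prop) : X -> Prop :=
| span_zero : in_span S vzero
| span_step : forall c v w, S v -> in_span S w -> in_span S (vadd (vscal c v) w).

Definition in_closure {X : NormedSpace} (S : X -> Prop) (x : X) : Prop :=
  forall eps, 0 < eps -> exists y, S y /\ vnorm (vsub x y) < eps.

Definition cseq := nat -> Cx.
Definition szero : cseq := fun _ => C0.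
Definition sadd (a b : cseq) : cseq := fun n => Cadd (a n) (b n).
Definition sopp (a : cseq) : cseq := fun n => Copp (a n).
Definition smul (a b : cseq) : cseq := fun n => Cmul (a n) (b n).
Definition sscal (c : Cx) (a : cseq) : cseq := fun n => Cmul c (a n).
Definition pseq (n : nat) : cseq := fun m => if Nat.eqb m n then C1 else C0.
Definition finsupp (a : cseq) : Prop := exists N, forall m, (N <= m)%nat -> a m = C0.

Definition is_seq_algebra (Aset : cseq -> Prop) (Anorm : cseq -> R) : Prop :=
  Aset szero /\
  (forall a b, Aset a -> Aset b -> Aset (sadd a b)) /\
  (forall c a, Aset a -> Aset (sscal c a)) /\
  (forall a b, Aset a -> Aset b -> Aset (smul a b)) /\
  (forall a, Aset a -> Anorm a = 0 -> forall n, a n = C0) /\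
  (forall a b, Aset a -> Aset b -> Anorm (sadd a b) <= Anorm a + Anorm b) /\
  (forall c a, Aset a -> Anorm (sscal c a) = Cabs c * Anorm a) /\
  (forall a b, Aset a -> Aset b -> Anorm (smul a b) <= Anorm a * Anorm b) /\
  (forall a, finsupp a -> Aset a) /\
  (forall a, Aset a -> forall eps, 0 < eps ->
      exists b, finsupp b /\ Anorm (sadd a (sopp b)) < eps) /\
  (forall n, Anorm (pseq n) = 1).

(** A contractive (left) normed A-module structure on X given by [act]
    (only its values on elements of Aset matter). *)
Definition is_module (Aset : cseq -> Prop) (Anorm : cseq -> R)
    (X : NormedSpace) (act : cseq -> X -> X) : Prop :=
  (forall a x y, Aset a -> act a (vadd x y) = vadd (act a x) (act a y)) /\
  (forall a c x, Aset a -> act a (vscal c x) = vscal c (act a x)) /\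
  (forall a b x, Aset a -> Aset b -> act (sadd a b) x = vadd (act a x) (act b x)) /\
  (forall c a x, Aset a -> act (sscal c a) x = vscal c (act a x)) /\
  (forall a b x, Aset a -> Aset b -> act a (act b x) = act (smul a b) x) /\
  (forall a x, Aset a -> vnorm (act a x) <= Anorm a * vnorm x).

Definition is_essential (Aset : cseq -> Prop) (X : NormedSpace)
    (act : cseq -> X -> X) : Prop :=
  forall x : X,
    in_closure (in_span (fun v => exists a y, Aset a /\ v = act a y)) x.

Definition is_homogeneous (X : NormedSpace) (act : cseq -> X -> X) : Prop :=
  forall x y : X, (forall n, vnorm (act (pseq n) x) <= vnorm (act (pseq n) y)) ->
    vnorm x <= vnorm y.

Definition is_module_completion (Aset : cseq -> Prop) (Anorm : cseq -> R)
    (X : NormedSpace) (act : cseq -> X -> X)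
    (Y : NormedSpace) (actY : cseq -> Y -> Y) (j : X -> Y) : Prop :=
  is_complete Y /\
  is_module Aset Anorm Y actY /\
  (forall x y, j (vadd x y) = vadd (j x) (j y)) /\
  (forall c x, j (vscal c x) = vscal c (j x)) /\
  (forall x, vnorm (j x) = vnorm x) /\
  (forall y : Y, in_closure (fun z => exists x, z = j x) y) /\
  (forall a x, Aset a -> j (act a x) = actY a (j x)).

(* Main.v *)
From Stdlib Require Import Reals Lra Lia FunctionalExtensionality ClassicalEpsilon.
Require Import Defs.
Open Scope R_scope.

Ltac cx := unfold C0, C1, RtoC, Cadd, Cmul, Copp; simpl; f_equal; ring.

Definition m1 : Cx := Copp C1.
Definition Pn (N : nat) : cseq := fun m => if Nat.ltb m N then C1 else C0.

Lemma smul_pp n : smul (pseq n) (pseq n) = pseq n.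
Proof. extensionality m; unfold smul, pseq; destruct (Nat.eqb m n); cx. Qed.

Lemma smul_pP n N : smul (pseq n) (Pn N) = if Nat.ltb n N then pseq n else szero.
Proof.
  destruct (Nat.ltb n N) eqn:E; extensionality m; unfold smul, pseq, Pn, szero;
  destruct (Nat.eqb m n) eqn:E2; try cx;
  apply Nat.eqb_eq in E2; subst; rewrite E; cx.
Qed.

Lemma smul_p_fin n b M : (forall m, (M <= m)%nat -> b m = C0) -> (M <= n)%nat ->
  smul (pseq n) b = szero.
Proof.
  intros Hb Hn; extensionality m; unfold smul, pseq, szero.
  destruct (Nat.eqb m n) eqn:E.
  - apply Nat.eqb_eq in E; subst; rewrite Hb by lia; cx.
  - destruct (b m); cx.
Qed.

Lemma szero_scal : sscal C0 szero = szero.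
Proof. extensionality m; unfold sscal, szero; cx. Qed.

Lemma sopp_scal b : sopp b = sscal m1 b.
Proof. extensionality m; unfold sopp, sscal, m1; destruct (b m); cx. Qed.

Lemma fin_pseq n : finsupp (pseq n).
Proof. exists (S n); intros m Hm; unfold pseq; replace (Nat.eqb m n) with false; auto.
  symmetry; apply Nat.eqb_neq; lia. Qed.

Lemma fin_Pn N : finsupp (Pn N).
Proof. exists N; intros m Hm; unfold Pn; replace (Nat.ltb m N) with false; auto.
  symmetry; apply Nat.ltb_ge; lia. Qed.

Lemma Cabs_C0 : Cabs C0 = 0.
Proof. unfold Cabs, C0; simpl. rewrite Rmult_0_l, Rplus_0_l; apply sqrt_0. Qed.
Lemma Cabs_C1 : Cabs C1 = 1.
Proof. unfold Cabs, C1; simpl. replace (1*1+0*0) with 1 by ring; apply sqrt_1. Qed.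
Lemma Cabs_m1 : Cabs m1 = 1.
Proof. unfold Cabs, m1, Copp, C1; simpl. replace (- (1) * - (1) + - 0 * - 0) with 1 by ring; apply sqrt_1. Qed.
Lemma Cabs_pos c : 0 <= Cabs c.
Proof. apply sqrt_pos. Qed.

Section NS.
Variable Z : NormedSpace.
Implicit Types a b c d x y : Z.

Lemma vadd0r x : vadd x vzero = x.
Proof. rewrite vadd_comm; apply vadd_0. Qed.

Lemma vscal0 x : vscal C0 x = vzero.
Proof.
  assert (E : vscal C0 x = vadd (vscal C0 x) (vscal C0 x)).
  { rewrite <- vscal_addl; f_equal; cx. }
  set (s := vscal C0 x) in *.
  transitivity (vadd s (vadd s (vopp s))).
  { rewrite vadd_opp, vadd0r; reflexivity. }
  rewrite vadd_assoc, <- E; apply vadd_opp.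
Qed.

Lemma inv_uniq x y : vadd x y = vzero -> y = vopp x.
Proof.
  intros H. rewrite <- (vadd_0 _ (vopp x)). rewrite <- H.
  rewrite (vadd_comm _ x y), <- vadd_assoc, vadd_opp, vadd0r. reflexivity.
Qed.

Lemma vopp_scal x : vopp x = vscal m1 x.
Proof.
  symmetry; apply inv_uniq.
  rewrite <- (vscal_1 _ x) at 1. rewrite <- vscal_addl.
  replace (Cadd C1 m1) with C0 by (unfold m1; cx). apply vscal0.
Qed.

Lemma norm0 : vnorm (@vzero Z) = 0.
Proof. rewrite <- (vscal0 vzero), vnorm_scal, Cabs_C0; ring. Qed.

Lemma norm_opp x : vnorm (vopp x) = vnorm x.
Proof. rewrite vopp_scal, vnorm_scal, Cabs_m1; ring. Qed.

Lemma norm_nonneg x : 0 <= vnorm x.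
Proof.
  pose proof (vnorm_triangle _ x (vopp x)) as H.
  rewrite vadd_opp, norm0, norm_opp in H. lra.
Qed.

Lemma vsub_diag x : vsub x x = vzero.
Proof. apply vadd_opp. Qed.

Lemma opp0 : vopp (@vzero Z) = vzero.
Proof. symmetry; apply inv_uniq, vadd_0. Qed.

Lemma vsub_0 x : vsub x vzero = x.
Proof. unfold vsub; rewrite opp0; apply vadd0r. Qed.

Lemma vsub_eq a b : vsub a b = vzero -> a = b.
Proof.
  unfold vsub; intros H.
  rewrite <- (vadd_0 _ b), <- H, <- vadd_assoc, (vadd_comm _ (vopp b)), vadd_opp, vadd0r.
  reflexivity.
Qed.

Lemma opp_add a b : vopp (vadd a b) = vadd (vopp a) (vopp b).
Proof. rewrite !vopp_scal, vscal_addr; reflexivity. Qed.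

Lemma opp_opp a : vopp (vopp a) = a.
Proof. symmetry; apply inv_uniq. rewrite vadd_comm; apply vadd_opp. Qed.

Lemma AC4 a b c d : vadd (vadd a b) (vadd c d) = vadd (vadd a c) (vadd b d).
Proof.
  rewrite <- !vadd_assoc. f_equal.
  rewrite !vadd_assoc. f_equal. apply vadd_comm.
Qed.

Lemma vsub4 a b c d : vsub (vadd a b) (vadd c d) = vadd (vsub a c) (vsub b d).
Proof. unfold vsub; rewrite opp_add; apply AC4. Qed.

Lemma vsub_sub a b c d : vsub (vsub a b) (vsub c d) = vsub (vsub a c) (vsub b d).
Proof. unfold vsub. rewrite !opp_add, !opp_opp. apply AC4. Qed.

Lemma sub_sym a b : vnorm (vsub a b) = vnorm (vsub b a).
Proof.
  rewrite <- norm_opp. f_equal. unfold vsub; rewrite opp_add, opp_opp, vadd_comm; reflexivity.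
Qed.

Lemma tri_sub a b c : vnorm (vsub a c) <= vnorm (vsub a b) + vnorm (vsub b c).
Proof.
  replace (vsub a c) with (vadd (vsub a b) (vsub b c)) by
   (unfold vsub; rewrite (vadd_comm _ b), AC4, (vadd_comm _ (vopp b)), vadd_opp, vadd0r; reflexivity).
  apply vnorm_triangle.
Qed.

Lemma norm_le a b : vnorm a <= vnorm b + vnorm (vsub a b).
Proof.
  replace a with (vadd b (vsub a b)) at 1 by
   (unfold vsub; rewrite vadd_comm, <- vadd_assoc, (vadd_comm _ (vopp b)), vadd_opp, vadd0r; reflexivity).
  apply vnorm_triangle.
Qed.

Lemma norm_sub_le a b : vnorm (vsub a b) <= vnorm a + vnorm b.
Proof. unfold vsub; rewrite <- (norm_opp b); apply vnorm_triangle. Qed.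

Lemma scal_sub (c : Cx) a b : vscal c (vsub a b) = vsub (vscal c a) (vscal c b).
Proof.
  unfold vsub; rewrite vscal_addr, !vopp_scal, !vscal_mul.
  replace (Cmul c m1) with (Cmul m1 c) by (unfold m1; destruct c; cx). reflexivity.
Qed.

Lemma vscal_zero (c : Cx) : vscal c (@vzero Z) = vzero.
Proof. apply vnorm_eq0. rewrite vnorm_scal, norm0; ring. Qed.

Lemma vsub_add_l a b c : vsub (vadd a b) c = vadd a (vsub b c).
Proof. unfold vsub; rewrite vadd_assoc; reflexivity. Qed.

End NS.

Lemma small_zero a : 0 <= a -> (forall eps, 0 < eps -> a < eps) -> a = 0.
Proof. intros H1 H2. destruct (Req_dec a 0); auto. specialize (H2 a). lra. Qed.

Lemma le_eps a b c : 0 < c -> (forall eps, 0 < eps -> a <= b + c * eps) -> a <= b.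
Proof.
  intros Hc H. destruct (Rle_dec a b) as [|Hn]; auto.
  specialize (H ((a - b)/(2*c))).
  assert (c * ((a-b)/(2*c)) = (a-b)/2) by (field; lra).
  assert (0 < (a-b)/(2*c)) by (apply Rdiv_lt_0_compat; lra). lra.
Qed.

Definition Qop {Z : NormedSpace} (actZ : cseq -> Z -> Z) N z := vsub z (actZ (Pn N) z).
Definition fincoord {Z : NormedSpace} (actZ : cseq -> Z -> Z) (w : Z) :=
  exists M, forall n, (M <= n)%nat -> actZ (pseq n) w = vzero.

Section Mod.
Context {Aset : cseq -> Prop} {Anorm : cseq -> R} {Z : NormedSpace} {actZ : cseq -> Z -> Z}.
Hypothesis HA : is_seq_algebra Aset Anorm.
Hypothesis HM : is_module Aset Anorm Z actZ.

Lemma A_fin a : finsupp a -> Aset a.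
Proof. destruct HA as (?&?&?&?&?&?&?&?&h&?&?). apply h. Qed.
Lemma A_p n : Aset (pseq n).
Proof. apply A_fin, fin_pseq. Qed.
Lemma A_P N : Aset (Pn N).
Proof. apply A_fin, fin_Pn. Qed.
Lemma A_0 : Aset szero.
Proof. destruct HA as (h&_). exact h. Qed.
Lemma A_sscal c a : Aset a -> Aset (sscal c a).
Proof. destruct HA as (?&?&h&_). apply h. Qed.
Lemma A_sadd a b : Aset a -> Aset b -> Aset (sadd a b).
Proof. destruct HA as (?&h&_). apply h. Qed.
Lemma A_pnorm n : Anorm (pseq n) = 1.
Proof. destruct HA as (?&?&?&?&?&?&?&?&?&?&h). apply h. Qed.

Lemma M_add a x y : Aset a -> actZ a (vadd x y) = vadd (actZ a x) (actZ a y).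
Proof. destruct HM as (h&_). apply h. Qed.
Lemma M_scal a c x : Aset a -> actZ a (vscal c x) = vscal c (actZ a x).
Proof. destruct HM as (?&h&_). apply h. Qed.
Lemma M_sadd a b x : Aset a -> Aset b -> actZ (sadd a b) x = vadd (actZ a x) (actZ b x).
Proof. destruct HM as (?&?&h&_). apply h. Qed.
Lemma M_sscal c a x : Aset a -> actZ (sscal c a) x = vscal c (actZ a x).
Proof. destruct HM as (?&?&?&h&_). apply h. Qed.
Lemma M_comp a b x : Aset a -> Aset b -> actZ a (actZ b x) = actZ (smul a b) x.
Proof. destruct HM as (?&?&?&?&h&_). apply h. Qed.
Lemma M_bound a x : Aset a -> vnorm (actZ a x) <= Anorm a * vnorm x.
Proof. destruct HM as (?&?&?&?&?&h). apply h. Qed.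

Lemma M_zero a : Aset a -> actZ a vzero = vzero.
Proof. intros Ha. rewrite <- (vscal0 _ vzero) at 1. rewrite M_scal by auto. apply vscal0. Qed.
Lemma M_opp a x : Aset a -> actZ a (vopp x) = vopp (actZ a x).
Proof. intros Ha. rewrite !vopp_scal, M_scal by auto. reflexivity. Qed.
Lemma M_sub a x y : Aset a -> actZ a (vsub x y) = vsub (actZ a x) (actZ a y).
Proof. intros Ha. unfold vsub. rewrite M_add, M_opp by auto. reflexivity. Qed.
Lemma M_szero x : actZ szero x = vzero.
Proof. rewrite <- szero_scal, M_sscal by apply A_0. apply vscal0. Qed.
Lemma M_sopp b x : Aset b -> actZ (sopp b) x = vopp (actZ b x).
Proof. intros Hb. rewrite sopp_scal, M_sscal, vopp_scal by auto. reflexivity. Qed.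

Lemma coord_bound n z : vnorm (actZ (pseq n) z) <= vnorm z.
Proof. eapply Rle_trans; [apply M_bound, A_p|]. rewrite A_pnorm; lra. Qed.

Lemma coordP n N x : actZ (pseq n) (actZ (Pn N) x) = if Nat.ltb n N then actZ (pseq n) x else vzero.
Proof.
  rewrite M_comp, smul_pP by (apply A_p || apply A_P).
  destruct (Nat.ltb n N); auto using M_szero.
Qed.


Lemma coordQ n N z : actZ (pseq n) (Qop actZ N z) = if Nat.ltb n N then vzero else actZ (pseq n) z.
Proof.
  unfold Qop. rewrite M_sub, coordP by apply A_p.
  destruct (Nat.ltb n N). apply vsub_diag. apply vsub_0.
Qed.

Lemma Q_sub N a b : Qop actZ N (vsub a b) = vsub (Qop actZ N a) (Qop actZ N b).
Proof. unfold Qop. rewrite M_sub by apply A_P. apply vsub_sub. Qed.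

Lemma Q_bound N w : vnorm (Qop actZ N w) <= (1 + Rabs (Anorm (Pn N))) * vnorm w.
Proof.
  unfold Qop. eapply Rle_trans; [apply norm_sub_le|].
  pose proof (M_bound (Pn N) w (A_P N)). pose proof (norm_nonneg _ w).
  pose proof (Rle_abs (Anorm (Pn N))).
  assert (Anorm (Pn N) * vnorm w <= Rabs (Anorm (Pn N)) * vnorm w) by (apply Rmult_le_compat_r; lra).
  lra.
Qed.


End Mod.

Section Main.
Context {Aset : cseq -> Prop} {Anorm : cseq -> R} {X : NormedSpace} {act : cseq -> X -> X}
  {Y : NormedSpace} {actY : cseq -> Y -> Y} {j : X -> Y}.
Hypothesis HA : is_seq_algebra Aset Anorm.
Hypothesis HMX : is_module Aset Anorm X act.
Hypothesis HE : is_essential Aset X act.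
Hypothesis HH : is_homogeneous X act.
Hypothesis HC : is_module_completion Aset Anorm X act Y actY j.

Lemma A_dense a : Aset a -> forall eps, 0 < eps ->
      exists b, finsupp b /\ Anorm (sadd a (sopp b)) < eps.
Proof. destruct HA as (?&?&?&?&?&?&?&?&?&h&?). apply h. Qed.

Lemma span_close : forall v, in_span (fun v => exists a y, Aset a /\ v = act a y) v ->
  in_closure (fincoord act) v.
Proof.
  induction 1 as [| c v w Hv Hw IH].
  - intros eps He; exists vzero; split.
    + exists O; intros; apply (M_zero HMX), (A_p HA).
    + rewrite vsub_diag, norm0; lra.
  - intros eps He. destruct Hv as (a & y & Ha & ->).
    destruct (IH (eps/2)) as (w' & (Mw & HMw) & Hw'); [lra|].
    set (t := Cabs c * vnorm y).
    assert (Ht : 0 <= t) by (apply Rmult_le_pos; [apply Cabs_pos | apply norm_nonneg]).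
    assert (Hd : 0 < eps / (2 * (t + 1))) by (apply Rdiv_lt_0_compat; lra).
    destruct (A_dense a Ha _ Hd) as (b & Hbf & Hb).
    pose proof Hbf as (Mb & HMb).
    assert (Hab : Aset b) by (apply (A_fin HA), Hbf).
    exists (vadd (vscal c (act b y)) w'). split.
    + exists (Nat.max Mb Mw). intros n Hn.
      rewrite (M_add HMX), (M_scal HMX), (M_comp HMX), (smul_p_fin n b Mb), (M_szero HA HMX), HMw,
        vscal_zero, vadd0r; auto; try apply (A_p HA); lia.
    + rewrite vsub4. eapply Rle_lt_trans; [apply vnorm_triangle|].
      rewrite <- scal_sub, vnorm_scal.
      unfold vsub at 1. rewrite <- (M_sopp HMX), <- (M_sadd HMX); auto.
      2:{ rewrite sopp_scal; apply (A_sscal HA); auto. }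
      set (A := Anorm (sadd a (sopp b))) in *.
      assert (H1 : vnorm (act (sadd a (sopp b)) y) <= A * vnorm y).
      { apply (M_bound HMX). apply (A_sadd HA); auto. rewrite sopp_scal; apply (A_sscal HA); auto. }
      assert (H2 : Cabs c * vnorm (act (sadd a (sopp b)) y) <= A * t).
      { unfold t. pose proof (Cabs_pos c).
        apply Rle_trans with (Cabs c * (A * vnorm y)). apply Rmult_le_compat_l; auto. lra. }
      assert (H3 : A * t <= eps / (2 * (t + 1)) * t) by (apply Rmult_le_compat_r; lra).
      replace (eps / (2 * (t + 1)) * t) with (eps/2 - eps / (2 * (t + 1))) in H3 by (field; lra).
      lra.
Qed.

Lemma X_tail x eps : 0 < eps -> exists N0, forall N, (N0 <= N)%nat -> vnorm (Qop act N x) < eps.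
Proof.
  intros He.
  destruct (HE x (eps/2)) as (v & Hv & Hxv); [lra|].
  destruct (span_close v Hv (eps/2)) as (w & (M & HMw) & Hvw); [lra|].
  exists M. intros N HN.
  pose proof (tri_sub _ x v w).
  apply Rle_lt_trans with (vnorm (vsub x w)); [|lra].
  apply HH. intros n. rewrite (coordQ HA HMX).
  destruct (Nat.ltb n N) eqn:E.
  - rewrite norm0; apply norm_nonneg.
  - apply Nat.ltb_ge in E. rewrite (M_sub HMX), (HMw n), vsub_0 by (auto; try apply (A_p HA); lia).
    apply Rle_refl.
Qed.

Lemma X_contr x N : vnorm (Qop act N x) <= vnorm x.
Proof.
  apply HH. intros n. rewrite (coordQ HA HMX).
  destruct (Nat.ltb n N). rewrite norm0; apply norm_nonneg. apply Rle_refl.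
Qed.

Lemma HMY : is_module Aset Anorm Y actY.
Proof. destruct HC as (_&h&_). exact h. Qed.

Lemma j_sub x y : j (vsub x y) = vsub (j x) (j y).
Proof.
  destruct HC as (_&_&jadd&jscal&_).
  unfold vsub. rewrite jadd, !vopp_scal, jscal. reflexivity.
Qed.

Lemma j_norm x : vnorm (j x) = vnorm x.
Proof. destruct HC as (_&_&_&_&h&_). apply h. Qed.

Lemma j_dense z : in_closure (fun z => exists x, z = j x) z.
Proof. destruct HC as (_&_&_&_&_&h&_). apply h. Qed.

Lemma j_Q N x : j (Qop act N x) = Qop actY N (j x).
Proof.
  destruct HC as (_&_&_&_&_&_&jact).
  unfold Qop. rewrite j_sub, jact by apply (A_P HA). reflexivity.
Qed.

Lemma Y_split N z x : vnorm (Qop actY N z) <= vnorm (Qop act N x) + vnorm (Qop actY N (vsub z (j x))).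
Proof.
  eapply Rle_trans; [apply (norm_le _ _ (Qop actY N (j x)))|].
  rewrite <- (Q_sub HA HMY), <- j_Q, j_norm. apply Rle_refl.
Qed.

Lemma Y_contr z N : vnorm (Qop actY N z) <= vnorm z.
Proof.
  set (K := Rabs (Anorm (Pn N))).
  assert (HK : 0 <= K) by apply Rabs_pos.
  apply le_eps with (c := 2 + K); [lra|]. intros eps He.
  destruct (j_dense z eps He) as (y' & (x & ->) & Hzx).
  pose proof (Y_split N z x).
  pose proof (Q_bound HA HMY N (vsub z (j x))). fold K in H0.
  pose proof (X_contr x N).
  pose proof (norm_le _ (j x) z). rewrite j_norm, sub_sym in H2.
  assert ((1 + K) * vnorm (vsub z (j x)) <= (1 + K) * eps) by (apply Rmult_le_compat_l; lra).
  lra.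
Qed.

Lemma Y_tail z eps : 0 < eps -> exists N0, forall N, (N0 <= N)%nat -> vnorm (Qop actY N z) < eps.
Proof.
  intros He.
  destruct (j_dense z (eps/2)) as (y' & (x & ->) & Hzx); [lra|].
  destruct (X_tail x (eps/2)) as (N0 & HN0); [lra|].
  exists N0. intros N HN.
  pose proof (Y_split N z x). pose proof (HN0 N HN).
  pose proof (Y_contr (vsub z (j x)) N). lra.
Qed.

End Main.

Fixpoint psum {Z : NormedSpace} (T : nat -> Z) (K : nat) : Z :=
  match K with O => vzero | S K => vadd (T K) (psum T K) end.
Fixpoint cnt (g : nat -> nat) (n K : nat) : R :=
  match K with O => 0 | S K => (if Nat.leb (g K) n then 1 else 0) + cnt g n K end.
Fixpoint Nk (f : nat -> nat) (k : nat) : nat :=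
  match k with O => O | S k => Nat.max (S (Nk f k)) (f (S k)) end.

Lemma Nk_ge f k : (k <= Nk f k)%nat.
Proof. induction k; [apply Nat.le_refl| cbn [Nk]; lia]. Qed.
Lemma Nk_mono f i k : (i <= k)%nat -> (Nk f i <= Nk f k)%nat.
Proof. induction 1; auto. cbn [Nk]; lia. Qed.
Lemma Nk_f f k : (f (S k) <= Nk f (S k))%nat.
Proof. cbn [Nk]; lia. Qed.

Lemma cnt_stable g n : (forall k, (k <= g k)%nat) ->
  forall K, (S n <= K)%nat -> cnt g n K = cnt g n (S n).
Proof.
  intros Hg K HK. induction HK as [|K HK IH]; auto.
  simpl cnt at 1. rewrite IH. replace (Nat.leb (g K) n) with false. simpl; ring.
  symmetry; apply Nat.leb_gt. specialize (Hg K); lia.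
Qed.

Lemma cnt_mono g n K d : cnt g n K <= cnt g n (K + d).
Proof.
  induction d. rewrite Nat.add_0_r; lra.
  rewrite Nat.add_succ_r; simpl. destruct (Nat.leb _ _); lra.
Qed.

Lemma cnt_full g n K : (forall i, (i < K)%nat -> (g i <= n)%nat) -> cnt g n K = INR K.
Proof.
  induction K; intros H; simpl; auto.
  rewrite IHK by (intros; apply H; lia).
  replace (Nat.leb (g K) n) with true by (symmetry; apply Nat.leb_le, H; lia).
  destruct K; simpl; ring.
Qed.

Lemma psum_cauchy {Z : NormedSpace} (T : nat -> Z) :
  (forall k, (1 <= k)%nat -> vnorm (T k) < (1/2)^k) ->
  forall n d, (1 <= n)%nat ->
  vnorm (vsub (psum T (n+d)) (psum T n)) <= 2*(1/2)^n - 2*(1/2)^(n+d).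
Proof.
  intros HT n d Hn. induction d.
  - rewrite Nat.add_0_r, vsub_diag, norm0; lra.
  - rewrite Nat.add_succ_r; simpl psum. rewrite vsub_add_l.
    eapply Rle_trans; [apply vnorm_triangle|].
    pose proof (HT (n + d)%nat ltac:(lia)). simpl. lra.
Qed.

Lemma psum_cauchy2 {Z : NormedSpace} (T : nat -> Z) :
  (forall k, (1 <= k)%nat -> vnorm (T k) < (1/2)^k) ->
  forall eps, 0 < eps -> exists N, forall m n, (N <= m)%nat -> (N <= n)%nat ->
        vnorm (vsub (psum T m) (psum T n)) < eps.
Proof.
  intros HT eps He.
  destruct (pow_lt_1_zero (1/2)) with (y := eps/2) as [N1 HN1].
  { rewrite Rabs_pos_eq; lra. } { lra. }
  exists (Nat.max 1 N1). intros m n Hm Hn.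
  assert (Hgen : forall a b, (Nat.max 1 N1 <= b)%nat -> (b <= a)%nat ->
     vnorm (vsub (psum T a) (psum T b)) < eps).
  { intros a b Hb Hab. replace a with (b + (a - b))%nat by lia.
    pose proof (psum_cauchy T HT b (a - b) ltac:(lia)).
    pose proof (pow_lt (1/2) (b + (a-b)) ltac:(lra)).
    pose proof (HN1 b ltac:(lia)). pose proof (Rle_abs ((1/2)^b)). lra. }
  destruct (Nat.le_ge_cases n m).
  - apply Hgen; auto.
  - rewrite sub_sym. apply Hgen; auto.
Qed.

Section Coord.
Context {Aset : cseq -> Prop} {Anorm : cseq -> R} {Z : NormedSpace} {actZ : cseq -> Z -> Z}.
Hypothesis HA : is_seq_algebra Aset Anorm.
Hypothesis HM : is_module Aset Anorm Z actZ.

Lemma coord_psum g x n K :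
  actZ (pseq n) (psum (fun k => Qop actZ (g k) x) K) = vscal (RtoC (cnt g n K)) (actZ (pseq n) x).
Proof.
  induction K; simpl.
  - rewrite (M_zero HM) by apply (A_p HA). symmetry; apply vscal0.
  - rewrite (M_add HM), IHK, (coordQ HA HM) by apply (A_p HA).
    destruct (Nat.ltb n (g K)) eqn:E1; destruct (Nat.leb (g K) n) eqn:E2.
    + apply Nat.ltb_lt in E1; apply Nat.leb_le in E2; lia.
    + rewrite vadd_0, Rplus_0_l; reflexivity.
    + replace (RtoC (1 + cnt g n K)) with (Cadd C1 (RtoC (cnt g n K))) by cx.
      rewrite vscal_addl, vscal_1; reflexivity.
    + apply Nat.ltb_ge in E1; apply Nat.leb_gt in E2; lia.
Qed.
End Coord.

Theorem proposition1p7
  (Aset : cseq -> Prop) (Anorm : cseq -> R)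
  (X : NormedSpace) (act : cseq -> X -> X)
  (Y : NormedSpace) (actY : cseq -> Y -> Y) (j : X -> Y) :
  is_seq_algebra Aset Anorm ->
  is_module Aset Anorm X act ->
  is_essential Aset X act ->
  is_homogeneous X act ->
  is_module_completion Aset Anorm X act Y actY j ->
  forall x : Y, exists (xb : Y) (lam : nat -> R),
    (forall n, 1 <= lam n) /\ cv_infty lam /\
    (forall n, actY (pseq n) xb = vscal (RtoC (lam n)) (actY (pseq n) x)).
Proof.
  intros HA HMX HE HH HC x.
  pose proof (HMY HC) as HMY.
  assert (tail : forall k, exists N0, forall N, (N0 <= N)%nat -> vnorm (Qop actY N x) < (1/2)^k).
  { intros k. apply (Y_tail HA HMX HE HH HC). apply pow_lt; lra. }
  set (f := fun k => proj1_sig (constructive_indefinite_description _ (tail k))).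
  assert (Hf : forall k N, (f k <= N)%nat -> vnorm (Qop actY N x) < (1/2)^k).
  { intros k. unfold f. destruct (constructive_indefinite_description _ (tail k)) as [N0 HN0].
    simpl. exact HN0. }
  set (g := Nk f).
  set (T := fun k => Qop actY (g k) x).
  assert (HT : forall k, (1 <= k)%nat -> vnorm (T k) < (1/2)^k).
  { intros [|k] Hk; [lia|]. unfold T, g. apply Hf, Nk_f. }
  destruct HC as (Hcomp & _).
  destruct (Hcomp (psum T) (psum_cauchy2 T HT)) as [xb Hxb].
  assert (Hg : forall k, (k <= g k)%nat) by (intros; apply Nk_ge).
  exists xb, (fun n => cnt g n (S n)). split; [|split].
  - intros n. pose proof (cnt_mono g n 1 n). simpl in H |- *.
    lra.
  - intros M. destruct (INR_archimed 1 M) as [k Hk]; [lra|].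
    exists (g k). intros n Hn.
    assert (Hkn : (k <= n)%nat) by (specialize (Hg k); lia).
    pose proof (cnt_mono g n (S k) (n - k)).
    replace (S k + (n - k))%nat with (S n) in H by lia.
    rewrite cnt_full in H.
    + rewrite S_INR in H. lra.
    + intros i Hi. unfold g. pose proof (Nk_mono f i k ltac:(lia)). fold g in H0 |- *. lia.
  - intros n. apply vsub_eq, vnorm_eq0, small_zero; [apply norm_nonneg|].
    intros eps He. destruct (Hxb eps He) as [N HN].
    set (K := Nat.max N (S n)).
    specialize (HN K ltac:(lia)).
    pose proof (coord_psum HA HMY g x n K) as Hc. fold T in Hc.
    rewrite (cnt_stable g n Hg K) in Hc by lia.
    rewrite <- Hc, <- (M_sub HMY) by apply (A_p HA).
    eapply Rle_lt_trans; [apply (coord_bound HA HMY)|]. rewrite sub_sym; exact HN.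
Qed.
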